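(* Let $d,H\in\mathbb{N}$ and $0\le a\le b\le1$. Consider an arbitrary sequence of cost functions $\ell_t:\mathcal{X}_{d,H,a,b}\to\mathbb{R}$ which are convex and $L$-Lipschitz with respect to $\|\cdot\|_{d,H}$. Then the iterates $z_t=(p_t,M_t^{[1:H]})$ of Lazy Mirror Descent on $\mathcal{X}_{d,H,a,b}$ with step size $\eta=\sqrt{2dH\ln(d)}/(L\sqrt T)$, regularizer $R_{d,H}$ and losses $\ell_1,\dots,\ell_T$ satisfy $$\sum_{t=1}^T\ell_t(p_t,M_t^{[1:H]})-\min_{(p,M^{[1:H]})\in\mathcal{X}_{d,H,a,b}}\sum_{t=1}^T\ell_t(p,M^{[1:H]})\le L\sqrt{32dH\ln(d)\cdot T}.$$ Moreover, with $\beta:=\sqrt{2dH\ln(d)}/\sqrt T$, for all $t\in[T-1]$ we have $\|p_t-p_{t+1}\|_1\le\beta$ and $\max_{h\in[H]}\|M_t^{[h]}-M_{t+1}^{[h]}\|_{1\to1}\le\beta$.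
   Context: $\Delta^d_a:=a\Delta^d$ (scaled probability simplex), $\mathbb{S}^d_a:=\{aM:M\text{ a }d\times d\text{ column-stochastic matrix}\}$, and $\mathcal{X}_{d,H,a,b}:=\bigcup_{a'\in[a,b]}\Delta^d_{a'}\times(\mathbb{S}^d_{a'})^H\subset\mathbb{R}^d\times(\mathbb{R}^{d\times d})^H\cong\mathbb{R}^{d+Hd^2}$. Norm: $\|(p,M^{[1:H]})\|_{d,H}^2:=\|p\|_1^2+\sum_{h=1}^H\sum_{j=1}^d\|M^{[h]}_{\cdot,j}\|_1^2$, where $M_{\cdot,j}$ is the $j$-th column; $\|M\|_{1\to1}:=\sup_{\|x\|_1=1}\|Mx\|_1$. For $v\in\mathbb{R}^d_{\ge0}$ with $\sum_jv_j\le1$, $v^c:=1-\sum_jv_j$ and $\mathrm{Ent}(v):=v^c\ln\frac1{v^c}+\sum_jv_j\ln\frac1{v_j}$; $R_{d,H}(p,M^{[1:H]}):=-\mathrm{Ent}(p)-\sum_{h=1}^H\sum_{j=1}^d\mathrm{Ent}(M^{[h]}_{\cdot,j})$. Lazy Mirror Descent outputs $z_t:=\arg\min_{z\in\mathcal{X}}\sum_{s=1}^{t-1}\langle z,\nabla\ell_s(z_s)\rangle+\frac1\eta R_{d,H}(z)$ at step $t$, then receives $\ell_t$. *)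

(* Defs.v *)
From HB Require Import structures.
From mathcomp Require Import all_boot all_order all_algebra.
From mathcomp Require Import all_classical all_reals.
From mathcomp Require Import exp.
Set Implicit Arguments. Unset Strict Implicit. Unset Printing Implicit Defensive.
Import Order.TTheory GRing.Theory Num.Theory.
Local Open Scope ring_scope.
Local Open Scope classical_set_scope.

(* A point (p, M^[1:H]) of R^d x (R^{d x d})^H.  p is a column vector,
   M is a finite family of H square matrices (index h : 'I_H stands for h+1). *)
Notation mdpoint R d H := ('cV[R]_d * {ffun 'I_H -> 'M[R]_d})%type.

Section Defs.
Variable R : realType.

Definition norm1 {d} (v : 'cV[R]_d) : R := \sum_i `|v i 0|.

Definition opnorm11 {d} (M : 'M[R]_d) : R :=
  sup [set r | exists x : 'cV[R]_d, norm1 x = 1 /\ r = norm1 (M *m x)].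

Definition normdH {d H} (z : mdpoint R d H) : R :=
  Num.sqrt (norm1 z.1 ^+ 2 + \sum_(h < H) \sum_(j < d) norm1 (col j (z.2 h)) ^+ 2).

Definition dotp {d H} (z g : mdpoint R d H) : R :=
  \sum_(i < d) z.1 i 0 * g.1 i 0 +
  \sum_(h < H) \sum_(i < d) \sum_(j < d) z.2 h i j * g.2 h i j.

Definition in_sdelta {d} (a' : R) (p : 'cV[R]_d) : Prop :=
  (forall i, 0 <= p i 0) /\ \sum_i p i 0 = a'.

Definition in_sstoch {d} (a' : R) (M : 'M[R]_d) : Prop :=
  forall j, in_sdelta a' (col j M).

Definition inX {d H} (a b : R) (z : mdpoint R d H) : Prop :=
  exists a', a <= a' <= b /\ in_sdelta a' z.1 /\ forall h, in_sstoch a' (z.2 h).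

Definition xln1x (x : R) : R := if x == 0 then 0 else x * ln x^-1.

Definition Ent {d} (v : 'cV[R]_d) : R :=
  xln1x (1 - \sum_i v i 0) + \sum_i xln1x (v i 0).

Definition RdH {d H} (z : mdpoint R d H) : R :=
  - Ent z.1 - \sum_(h < H) \sum_(j < d) Ent (col j (z.2 h)).

Definition convex_on {d H} (a b : R) (f : mdpoint R d H -> R) : Prop :=
  forall x y (lam : R), inX a b x -> inX a b y -> 0 <= lam <= 1 ->
    f (lam *: x + (1 - lam) *: y) <= lam * f x + (1 - lam) * f y.

Definition lipschitz_on {d H} (a b L : R) (f : mdpoint R d H -> R) : Prop :=
  forall x y, inX a b x -> inX a b y -> `|f x - f y| <= L * normdH (x - y).

Definition subgrad_on {d H} (a b : R) (f : mdpoint R d H -> R) (z g : mdpoint R d H) : Prop :=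
  forall y, inX a b y -> f z + dotp g (y - z) <= f y.

(* dual-norm bound ||g||_* <= L for the dual of ||.||_{d,H} *)
Definition dual_bound {d H} (L : R) (g : mdpoint R d H) : Prop :=
  forall x, dotp g x <= L * normdH x.

(* Lazy Mirror Descent: for 1 <= t <= T, z t is a minimizer over X of
   sum_{s=1}^{t-1} <z, g s> + (1/eta) R_{d,H}(z), where g s is the (sub)gradient
   of loss s at z s. *)
Definition lazy_md {d H} (a b eta : R) (T : nat) (g z : nat -> mdpoint R d H) : Prop :=
  forall t, (1 <= t <= T)%N ->
    inX a b (z t) /\
    forall y, inX a b y ->
      \sum_(1 <= s < t) dotp (z t) (g s) + eta^-1 * RdH (z t)
      <= \sum_(1 <= s < t) dotp y (g s) + eta^-1 * RdH y.

End Defs.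

(* Main.v *)
Require Import Defs.
Set Warnings "-notation-overridden -ambiguous-paths -notation-incompatible-prefix".
From HB Require Import structures.
From mathcomp Require Import all_boot all_order all_algebra.
From mathcomp Require Import all_classical all_reals.
From mathcomp Require Import exp.
From mathcomp Require Import topology normedtype derive realfun.
From mathcomp Require Import ring lra.
Import Order.TTheory GRing.Theory Num.Theory.
Import numFieldNormedType.Exports.
Require Import Defs.
Local Open Scope ring_scope.
Section S.
Context {R : realType}.

Lemma is_derive_ln1m (s : R) : s < 1 -> is_derive s 1 (fun x => ln (1 - x)) (- (1 - s)^-1).
Proof.
move=> s1.
have d1 : is_derive s 1 (fun x : R => 1 - x) (-1).
  have H := @is_deriveB R R R (cst 1) id s 1 0 1 _ _.
  rewrite sub0r in H; exact: H.
have d2 : is_derive (1 - s) 1 (@ln R) (1 - s)^-1.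
  by apply: is_derive1_ln; rewrite subr_gt0.
have dc : derivable ((@ln R) \o (fun x : R => 1 - x)) s 1.
  apply/derivable1_diffP; apply: differentiable_comp.
  - apply/derivable1_diffP. exact: (@ex_derive _ _ _ _ _ _ _ d1).
  - apply/derivable1_diffP. exact: (@ex_derive _ _ _ _ _ _ _ d2).
apply: DeriveDef => //.
rewrite -derive1E.
rewrite (derive1_comp (@ex_derive _ _ _ _ _ _ _ d1) (@ex_derive _ _ _ _ _ _ _ d2)).
rewrite !derive1E !derive_val.
by rewrite mulrN1.
Qed.

Definition hbin (p x : R) := p * ln p - p * ln x + (1 - p) * ln (1 - p) - (1 - p) * ln (1 - x) - 2 * (p - x)^+2.

Lemma hbin_derive (p s : R) : 0 < s -> s < 1 ->
  is_derive s 1 (hbin p) (- p * s^-1 + (1 - p) * (1 - s)^-1 + 4 * (p - s)).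
Proof.
move=> s0 s1.
have d1 := is_derive1_ln s0.
have d2 := @is_derive_ln1m s s1.
apply: is_derive_eq.
rewrite -![_ *: _]/(_ * _). ring.
Qed.

Lemma pinsker_bin_main (p q : R) : 0 < q -> q < p -> p < 1 ->
  2 * (p - q)^+2 <= p * ln (p / q) + (1 - p) * ln ((1 - p) / (1 - q)).
Proof.
move=> q0 qp p1.
have p0 : 0 < p by apply: lt_trans qp.
have q1 : q < 1 by apply: lt_trans p1.
have inI x : x \in `[q, p] -> 0 < x /\ x < 1.
  rewrite in_itv /= => /andP[h1 h2]; split; [exact: lt_le_trans h1|exact: le_lt_trans p1].
have key := @ler0_derive1_le_cc R (hbin p) q p.
have H : hbin p p <= hbin p q.
  apply: key.
  - move=> x xI; have [x0 x1] := inI x (subset_itv_oo_cc xI).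
    exact: (@ex_derive _ _ _ _ _ _ _ (hbin_derive p x x0 x1)).
  - move=> x xI; have [x0 x1] := inI x (subset_itv_oo_cc xI).
    rewrite derive1E (@derive_val _ _ _ _ _ _ _ (hbin_derive p x x0 x1)).
    have -> : - p / x + (1 - p) / (1 - x) + 4 * (p - x) = ((x - p) * (1 - 2 * x)^+2) / (x * (1 - x)).
      by field; rewrite subr_eq0 !gt_eqF // ltr01.
    rewrite ler_pdivrMr ?mul0r; last by rewrite mulr_gt0 // subr_gt0.
    have xp : x < p by move: xI; rewrite in_itv /= => /andP[].
    apply: mulr_le0_ge0; [by rewrite subr_le0 ltW | exact: sqr_ge0].
  - apply: continuous_in_subspaceT => x xI.
    move: xI; rewrite inE /= => xI; have [x0 x1] := inI x xI.
    apply: differentiable_continuous; apply/derivable1_diffP.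
    exact: (@ex_derive _ _ _ _ _ _ _ (hbin_derive p x x0 x1)).
  - by rewrite in_itv /= lexx ltW.
  - by rewrite in_itv /= lexx ltW.
  - exact: ltW.
have E : hbin p p = 0 by rewrite /hbin; ring.
rewrite E /hbin in H.
rewrite !ln_div ?posrE ?subr_gt0 //.
lra.
Qed.

Lemma gone_derive (s : R) : 0 < s ->
  is_derive s 1 (fun x => - ln x - 2 * (1 - x)^+2) (- s^-1 + 4 * (1 - s)).
Proof.
move=> s0.
have d1 := is_derive1_ln s0.
apply: is_derive_eq.
rewrite -![_ *: _]/(_ * _). ring.
Qed.

Lemma pinsker_bin_one (q : R) : 0 < q -> q < 1 -> 2 * (1 - q)^+2 <= ln (1 / q).
Proof.
move=> q0 q1.
have inI x : x \in `[q, 1] -> 0 < x.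
  rewrite in_itv /= => /andP[h1 h2]; exact: lt_le_trans h1.
have H : - ln 1 - 2 * (1 - 1)^+2 <= - ln q - 2 * (1 - q)^+2 :> R.
  apply: (@ler0_derive1_le_cc R (fun x => - ln x - 2 * (1 - x)^+2) q 1).
  - move=> x xI; have x0 := inI x (subset_itv_oo_cc xI).
    exact: (@ex_derive _ _ _ _ _ _ _ (gone_derive x x0)).
  - move=> x xI; have x0 := inI x (subset_itv_oo_cc xI).
    rewrite derive1E (@derive_val _ _ _ _ _ _ _ (gone_derive x x0)).
    have -> : - x^-1 + 4 * (1 - x) = - ((1 - 2 * x)^+2 / x) by field; rewrite gt_eqF.
    by rewrite oppr_le0 divr_ge0 ?sqr_ge0 ?ltW.
  - apply: continuous_in_subspaceT => x xI.
    move: xI; rewrite inE /= => xI; have x0 := inI x xI.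
    apply: differentiable_continuous; apply/derivable1_diffP.
    exact: (@ex_derive _ _ _ _ _ _ _ (gone_derive x x0)).
  - by rewrite in_itv /= lexx ltW.
  - by rewrite in_itv /= lexx ltW.
  - exact: ltW.
rewrite ln1 in H.
rewrite ln_div ?posrE // ln1; lra.
Qed.

Lemma xlnxx (x : R) : x * ln (x / x) = 0.
Proof.
have [->|x0] := eqVneq x 0; first by rewrite mul0r.
by rewrite divff // ln1 mulr0.
Qed.

Lemma pinsker_bin (p q : R) : 0 <= q -> q <= p -> p <= 1 -> (0 < p -> 0 < q) ->
  2 * (p - q)^+2 <= p * ln (p / q) + (1 - p) * ln ((1 - p) / (1 - q)).
Proof.
move=> q0 qp p1 pq.
have [->|qltp] := eqVneq q p.
  by rewrite !xlnxx subrr expr0n /= mulr0 addr0.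
have {}qp : q < p by rewrite lt_neqAle qltp.
have p0 : 0 < p by exact: le_lt_trans qp.
have {}q0 := pq p0.
have [->|p1'] := eqVneq p 1.
  by rewrite subrr mul0r addr0 mul1r; apply: pinsker_bin_one => //; rewrite -[1]/(1:R); exact: lt_le_trans qp p1.
apply: pinsker_bin_main => //; rewrite lt_neqAle p1' p1 //.
Qed.

Lemma ln_le_sub1 (x : R) : 0 < x -> ln x <= x - 1.
Proof.
move=> x0; have H : -1 < x - 1 by lra.
by have := le_ln1Dx H; rewrite [1 + _]addrC subrK.
Qed.

Lemma ln_ge1 (x : R) : 0 < x -> 1 - x^-1 <= ln x.
Proof.
move=> x0; have := @ln_le_sub1 x^-1; rewrite invr_gt0 => /(_ x0).
rewrite lnV ?posrE //; lra.
Qed.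

Lemma kt_lb (a b A B : R) : 0 <= a -> 0 <= b -> (0 < a -> 0 < b) -> 0 < A -> 0 < B ->
  a * ln (A / B) + a - b * (A / B) <= a * ln (a / b).
Proof.
move=> a0 b0 ab A0 B0.
have [->|an0] := eqVneq a 0.
  rewrite !mul0r add0r sub0r oppr_le0; apply: mulr_ge0 => //; exact: divr_ge0 (ltW A0) (ltW B0).
have {}a0 : 0 < a by rewrite lt_neqAle eq_sym an0.
have {}b0 := ab a0.
have x0 : 0 < (a / b) / (A / B) by rewrite !divr_gt0.
have := @ln_ge1 _ x0.
rewrite ln_div ?posrE ?divr_gt0 // => H.
have E : a * (1 - ((a / b) / (A / B))^-1) = a - b * (A / B).
  by field; rewrite !gt_eqF.
have : a * (1 - ((a / b) / (A / B))^-1) <= a * (ln (a / b) - ln (A / B)).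
  by rewrite ler_pM2l.
rewrite E; lra.
Qed.

Lemma pos_sum (I : finType) (P : pred I) (a b : I -> R) :
  (forall i, P i -> 0 <= a i) ->
  (forall i, P i -> 0 <= b i) -> (forall i, P i -> 0 < a i -> 0 < b i) ->
  0 < \sum_(i | P i) a i -> 0 < \sum_(i | P i) b i.
Proof.
move=> a0 b0 ab A0.
rewrite lt_neqAle sumr_ge0 // andbT eq_sym; apply/negP => /eqP B0.
have bz := psumr_eq0P b0 B0.
move: A0; rewrite big1 ?ltxx // => i Pi.
apply/eqP; rewrite eq_le a0 // andbT leNgt; apply/negP => /(ab i Pi).
by rewrite bz // ltxx.
Qed.

Lemma logsum (I : finType) (P : pred I) (a b : I -> R) :
  (forall i, P i -> 0 <= a i) ->
  (forall i, P i -> 0 <= b i) -> (forall i, P i -> 0 < a i -> 0 < b i) ->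
  (\sum_(i | P i) a i) * ln ((\sum_(i | P i) a i) / (\sum_(i | P i) b i))
  <= \sum_(i | P i) a i * ln (a i / b i).
Proof.
move=> a0 b0 ab.
set A := \sum_(i | P i) a i; set B := \sum_(i | P i) b i.
have A0 : 0 <= A by rewrite sumr_ge0.
have [Az|Apos] := eqVneq A 0.
  rewrite Az mul0r big1 // => i Pi.
  by rewrite (psumr_eq0P a0 Az) // mul0r.
have {}Apos : 0 < A by rewrite lt_neqAle eq_sym Apos.
have Bpos : 0 < B by exact: pos_sum a0 b0 ab Apos.
apply: le_trans (_ : \sum_(i | P i) (a i * ln (A / B) + a i - b i * (A / B)) <= _); last first.
  by apply: ler_sum => i Pi; apply: kt_lb => //; [exact: a0|exact: b0|exact: ab].
rewrite !big_split /= -!mulr_suml sumrN -/A -/B.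
rewrite -mulr_suml -/B.
have -> : B * (A / B) = A by field; rewrite gt_eqF.
by rewrite -addrA subrr addr0.
Qed.

Lemma pinsker (I : finType) (y m : I -> R) :
  (forall i, 0 <= y i) -> (forall i, 0 <= m i) -> (forall i, 0 < y i -> 0 < m i) ->
  \sum_i y i = 1 -> \sum_i m i = 1 ->
  (\sum_i `|y i - m i|)^+2 / 2 <= \sum_i y i * ln (y i / m i).
Proof.
move=> y0 m0 ym Sy Sm.
pose A := [pred i | m i <= y i].
rewrite (bigID A) /= in Sy; rewrite (bigID A) /= in Sm.
rewrite (bigID A) /= [X in _ <= X](bigID A) /=.
set Py := \sum_(i | A i) y i in Sy *; set Pn := \sum_(i | ~~ A i) y i in Sy *.
set Qy := \sum_(i | A i) m i in Sm *; set Qn := \sum_(i | ~~ A i) m i in Sm *.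
have E1 : \sum_(i | A i) `|y i - m i| = Py - Qy.
  rewrite -sumrB; apply: eq_bigr => i Ai; rewrite ger0_norm // subr_ge0; exact: Ai.
have E2 : \sum_(i | ~~ A i) `|y i - m i| = Qn - Pn.
  rewrite -sumrB; apply: eq_bigr => i Ai; rewrite ler0_norm ?opprB // subr_le0.
  by move: Ai; rewrite /A /= -ltNge => /ltW.
rewrite E1 E2.
have L1 := @logsum I A y m (fun i _ => y0 i) (fun i _ => m0 i) (fun i _ => ym i).
have L2 := @logsum I (predC A) y m (fun i _ => y0 i) (fun i _ => m0 i) (fun i _ => ym i).
rewrite -/Py -/Qy in L1; rewrite -/Pn -/Qn in L2.
have Qy0 : 0 <= Qy by rewrite sumr_ge0.
have Pn0 : 0 <= Pn by rewrite sumr_ge0.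
have QP : Qy <= Py by apply: ler_sum => i Ai; exact: Ai.
have PQ : 0 < Py -> 0 < Qy := @pos_sum I A y m (fun i _ => y0 i) (fun i _ => m0 i) (fun i _ => ym i).
have B := @pinsker_bin Py Qy Qy0 QP (ltac:(lra)) PQ.
have EP : Pn = 1 - Py by lra.
have EQ : Qn = 1 - Qy by lra.
rewrite EP EQ in L2.
have -> : (Py - Qy + (Qn - Pn)) ^+ 2 / 2 = 2 * (Py - Qy)^+2.
  by rewrite EP EQ; field.
move: L1 L2; rewrite /A /=.
lra.
Qed.

Lemma xln1xE (x : R) : 0 <= x -> xln1x x = - (x * ln x).
Proof.
rewrite /xln1x; have [->|x0] := eqVneq x 0; first by rewrite mul0r oppr0.
move=> xge; have xp : 0 < x by rewrite lt_neqAle eq_sym x0.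
by rewrite lnV ?posrE // mulrN.
Qed.

Lemma kt_split (y m : R) : 0 <= y -> (0 < y -> 0 < m) -> y * ln (y / m) = y * ln y - y * ln m.
Proof.
have [->|y0] := eqVneq y 0; first by rewrite !mul0r subrr.
move=> yge ym; have yp : 0 < y by rewrite lt_neqAle eq_sym y0.
by rewrite ln_div ?posrE ?ym // mulrBr.
Qed.

Lemma js_coord (lam y z : R) : 0 < lam -> lam < 1 -> 0 <= y -> 0 <= z ->
  xln1x (lam * y + (1 - lam) * z) - lam * xln1x y - (1 - lam) * xln1x z =
  lam * (y * ln (y / (lam * y + (1 - lam) * z))) +
  (1 - lam) * (z * ln (z / (lam * y + (1 - lam) * z))).
Proof.
move=> l0 l1 y0 z0.
have m0 : 0 <= lam * y + (1 - lam) * z by rewrite addr_ge0 // mulr_ge0 // ?subr_ge0 ltW.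
rewrite !xln1xE //.
rewrite !kt_split //.
- ring.
- move=> zp; apply: lt_le_trans (_ : (1 - lam) * z <= _); first by rewrite mulr_gt0 // subr_gt0.
  by rewrite lerDr mulr_ge0 // ltW.
- move=> yp; apply: lt_le_trans (_ : lam * y <= _); first by rewrite mulr_gt0.
  by rewrite lerDl mulr_ge0 // subr_ge0 ltW.
Qed.

Lemma ent_sc (I : finType) (y z : I -> R) (lam : R) : 0 < lam -> lam < 1 ->
  (forall i, 0 <= y i) -> (forall i, 0 <= z i) -> \sum_i y i = 1 -> \sum_i z i = 1 ->
  lam * (1 - lam) / 2 * (\sum_i `|y i - z i|)^+2 <=
  \sum_i xln1x (lam * y i + (1 - lam) * z i) - lam * \sum_i xln1x (y i)
    - (1 - lam) * \sum_i xln1x (z i).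
Proof.
move=> l0 l1 y0 z0 Sy Sz.
pose m i := lam * y i + (1 - lam) * z i.
have m0 i : 0 <= m i by rewrite addr_ge0 // mulr_ge0 // ?subr_ge0 ?ltW.
have Sm : \sum_i m i = 1.
  by rewrite big_split /= -!mulr_sumr Sy Sz !mulr1 addrC subrK.
have ym i : 0 < y i -> 0 < m i.
  move=> yp; apply: lt_le_trans (_ : lam * y i <= _); first by rewrite mulr_gt0.
  by rewrite lerDl mulr_ge0 // subr_ge0 ltW.
have zm i : 0 < z i -> 0 < m i.
  move=> zp; apply: lt_le_trans (_ : (1 - lam) * z i <= _); first by rewrite mulr_gt0 // subr_gt0.
  by rewrite lerDr mulr_ge0 // ltW.
have P1 := @pinsker I y m y0 m0 ym Sy Sm.
have P2 := @pinsker I z m z0 m0 zm Sz Sm.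
have E1 : \sum_i `|y i - m i| = (1 - lam) * \sum_i `|y i - z i|.
  rewrite mulr_sumr; apply: eq_bigr => i _.
  rewrite /m (_ : y i - _ = (1 - lam) * (y i - z i)); last by ring.
  by rewrite normrM ger0_norm // subr_ge0 ltW.
have E2 : \sum_i `|z i - m i| = lam * \sum_i `|y i - z i|.
  rewrite mulr_sumr; apply: eq_bigr => i _.
  rewrite /m (_ : z i - _ = lam * (z i - y i)); last by ring.
  by rewrite normrM ger0_norm ?ltW // distrC.
rewrite E1 in P1; rewrite E2 in P2.
have -> : \sum_i xln1x (lam * y i + (1 - lam) * z i) - lam * \sum_i xln1x (y i)
    - (1 - lam) * \sum_i xln1x (z i) =
    lam * (\sum_i y i * ln (y i / m i)) + (1 - lam) * (\sum_i z i * ln (z i / m i)).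
  rewrite !mulr_sumr -!sumrB -big_split /=; apply: eq_bigr => i _.
  by apply: js_coord; rewrite ?y0 ?z0.
set S := \sum_i `|y i - z i|.
set K1 := \sum_i y i * ln (y i / m i) in P1 *.
set K2 := \sum_i z i * ln (z i / m i) in P2 *.
have l1' : 0 < 1 - lam by rewrite subr_gt0.
have Q1 : lam * (((1 - lam) * S)^+2 / 2) <= lam * K1 by rewrite ler_pM2l.
have Q2 : (1 - lam) * ((lam * S)^+2 / 2) <= (1 - lam) * K2 by rewrite ler_pM2l.
have -> : lam * (1 - lam) / 2 * S ^+ 2 = lam * (((1 - lam) * S)^+2 / 2) + (1 - lam) * ((lam * S)^+2 / 2).
  by field.
lra.
Qed.

Definition extv {d} (v : 'cV[R]_d) (i : 'I_d.+1) : R :=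
  if unlift ord0 i is Some j then v j 0 else 1 - \sum_j v j 0.

Lemma sum_ext2 {d} (F : R -> R -> R) (v w : 'cV[R]_d) :
  \sum_i F (extv v i) (extv w i) = F (1 - \sum_j v j 0) (1 - \sum_j w j 0) + \sum_j F (v j 0) (w j 0).
Proof.
rewrite big_ord_recl /extv unlift_none; congr (_ + _).
by apply: eq_bigr => j _; rewrite liftK.
Qed.

Definition okv {d} (v : 'cV[R]_d) := (forall i, 0 <= v i 0) /\ \sum_i v i 0 <= 1.

Lemma Ent_ext {d} (v : 'cV[R]_d) : Ent v = \sum_i xln1x (extv v i).
Proof. by rewrite (sum_ext2 (fun x _ => xln1x x) v v). Qed.

Lemma ext_ok {d} (v : 'cV[R]_d) : okv v -> (forall i, 0 <= extv v i) /\ \sum_i extv v i = 1.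
Proof.
move=> [v0 v1]; split.
  by move=> i; rewrite /extv; case: (unlift ord0 i) => [j|] //; rewrite subr_ge0.
by rewrite (sum_ext2 (fun x _ => x) v v) /= subrK.
Qed.

Lemma Ent_sc_col {d} (v w : 'cV[R]_d) (lam : R) : 0 < lam -> lam < 1 -> okv v -> okv w ->
  lam * (1 - lam) / 2 * norm1 (v - w) ^+ 2 <=
  Ent (lam *: v + (1 - lam) *: w) - lam * Ent v - (1 - lam) * Ent w.
Proof.
move=> l0 l1 ov ow.
have [ev Sv] := @ext_ok _ v ov; have [ew Sw] := @ext_ok _ w ow.
have H := @ent_sc _ (extv v) (extv w) lam l0 l1 ev ew Sv Sw.
have E : Ent (lam *: v + (1 - lam) *: w) = \sum_i xln1x (lam * extv v i + (1 - lam) * extv w i).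
  rewrite (sum_ext2 (fun x y => xln1x (lam * x + (1 - lam) * y)) v w) /Ent.
  congr (xln1x _ + _).
    rewrite (eq_bigr (fun j => lam * v j 0 + (1 - lam) * w j 0)); last by move=> j _; rewrite !mxE.
    rewrite big_split /= -!mulr_sumr; ring.
  by apply: eq_bigr => j _; rewrite !mxE.
rewrite E !Ent_ext; apply: le_trans H.
have l1' : 0 <= lam * (1 - lam) / 2 by rewrite divr_ge0 // mulr_ge0 // ?subr_ge0 ltW.
apply: ler_wpM2l => //.
have N0 : 0 <= norm1 (v - w) by rewrite sumr_ge0.
have : norm1 (v - w) <= \sum_i `|extv v i - extv w i|.
  rewrite (sum_ext2 (fun x y => `|x - y|) v w) /norm1.
  rewrite (eq_bigr (fun j => `|v j 0 - w j 0|)); last by move=> j _; rewrite !mxE.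
  by rewrite lerDr.
nra.
Qed.

Lemma xln1x_ge0 (x : R) : 0 <= x -> x <= 1 -> 0 <= xln1x x.
Proof.
move=> x0 x1; rewrite xln1xE // oppr_ge0 mulr_ge0_le0 //; exact: ln_le0.
Qed.

Lemma xln1x_le (x c : R) : 0 <= x -> 0 < c -> xln1x x <= c^-1 + x * (ln c - 1).
Proof.
move=> x0 c0; have [->|xn0] := eqVneq x 0.
  by rewrite /xln1x eqxx mul0r addr0 invr_ge0 ltW.
have xp : 0 < x by rewrite lt_neqAle eq_sym xn0.
rewrite xln1xE //.
have H := @ln_le_sub1 ((x * c)^-1) (ltac:(by rewrite invr_gt0 mulr_gt0)).
rewrite lnV ?posrE ?mulr_gt0 // lnM ?posrE // in H.
have H2 : x * (- (ln x + ln c)) <= x * ((x * c)^-1 - 1) by rewrite ler_pM2l.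
have E : x * ((x * c)^-1 - 1) = c^-1 - x by field; rewrite !gt_eqF.
rewrite E in H2.
lra.
Qed.

Lemma elem_le_sum (I : finType) (F : I -> R) i : (forall j, 0 <= F j) -> F i <= \sum_j F j.
Proof.
move=> F0; rewrite (bigD1 i) //= lerDl sumr_ge0 // => j _; exact: F0.
Qed.

Lemma Ent_ge0 {d} (v : 'cV[R]_d) : okv v -> 0 <= Ent v.
Proof.
move=> ov; have [e0 Se] := @ext_ok _ v ov.
rewrite Ent_ext sumr_ge0 // => i _; apply: xln1x_ge0 => //.
by rewrite -Se; apply: elem_le_sum.
Qed.

Lemma Ent_le {d} (v : 'cV[R]_d) : okv v -> Ent v <= ln (d.+1)%:R.
Proof.
move=> ov; have [e0 Se] := @ext_ok _ v ov.
have c0 : 0 < (d.+1)%:R :> R by rewrite ltr0n.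
rewrite Ent_ext.
apply: le_trans (_ : \sum_i ((d.+1)%:R^-1 + extv v i * (ln (d.+1)%:R - 1)) <= _).
  by apply: ler_sum => i _; apply: xln1x_le.
rewrite big_split /= -mulr_suml Se mul1r sumr_const card_ord.
rewrite -[_ *+ _]mulr_natr mulVf ?gt_eqF //; lra.
Qed.
End S.

Section S2.
Variable R : realType.
Variables (d H : nat).
Implicit Types x y z : mdpoint R d H.

Lemma inX_ok (a b : R) z : b <= 1 -> inX a b z -> okv z.1 /\ (forall h j, okv (col j (z.2 h))).
Proof.
move=> b1 [a' [/andP[aa ab] [[p0 pS] hM]]]; split.
  by split => //; rewrite pS; exact: le_trans b1.
move=> h j; have [c0 cS] := hM h j; split => //; rewrite cS; exact: le_trans b1.
Qed.

Lemma fst_comb x y (lam mu : R) : (lam *: x + mu *: y).1 = lam *: x.1 + mu *: y.1.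
Proof. by []. Qed.

Lemma snd_comb x y (lam mu : R) h : (lam *: x + mu *: y).2 h = lam *: x.2 h + mu *: y.2 h.
Proof. by rewrite /= !ffunE. Qed.

Lemma fst_sub x y : (x - y).1 = x.1 - y.1.
Proof. by []. Qed.

Lemma snd_sub x y h : (x - y).2 h = x.2 h - y.2 h.
Proof. by rewrite /= !ffunE. Qed.

Lemma col_comb (A B : 'M[R]_d) (lam mu : R) j : col j (lam *: A + mu *: B) = lam *: col j A + mu *: col j B.
Proof. by apply/matrixP => i k; rewrite !mxE. Qed.

Lemma col_sub (A B : 'M[R]_d) j : col j (A - B) = col j A - col j B.
Proof. by apply/matrixP => i k; rewrite !mxE. Qed.

Lemma sdelta_comb (u v : 'cV[R]_d) (a1 a2 lam : R) : in_sdelta a1 u -> in_sdelta a2 v -> 0 <= lam <= 1 ->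
  in_sdelta (lam * a1 + (1 - lam) * a2) (lam *: u + (1 - lam) *: v).
Proof.
move=> [u0 uS] [v0 vS] /andP[l0 l1].
have l1' : 0 <= 1 - lam by rewrite subr_ge0.
split.
  by move=> i; rewrite !mxE addr_ge0 // mulr_ge0.
rewrite (eq_bigr (fun i => lam * u i 0 + (1 - lam) * v i 0)); last by move=> i _; rewrite !mxE.
by rewrite big_split /= -!mulr_sumr uS vS.
Qed.

Lemma inX_convex (a b : R) x y (lam : R) : inX a b x -> inX a b y -> 0 <= lam <= 1 ->
  inX a b (lam *: x + (1 - lam) *: y).
Proof.
move=> [a1 [/andP[aa1 ab1] [p1 hM1]]] [a2 [/andP[aa2 ab2] [p2 hM2]]] ll.
have /andP[l0 l1] := ll.
have l1' : 0 <= 1 - lam by rewrite subr_ge0.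
exists (lam * a1 + (1 - lam) * a2); split; [apply/andP; split|split].
- have : lam * a <= lam * a1 by rewrite ler_wpM2l.
  have : (1 - lam) * a <= (1 - lam) * a2 by rewrite ler_wpM2l.
  lra.
- have : lam * a1 <= lam * b by rewrite ler_wpM2l.
  have : (1 - lam) * a2 <= (1 - lam) * b by rewrite ler_wpM2l.
  lra.
- by rewrite fst_comb; apply: sdelta_comb.
- by move=> h j; rewrite snd_comb col_comb; apply: sdelta_comb; [exact: hM1|exact: hM2|].
Qed.

Lemma normdH_sqr z : normdH z ^+ 2 =
  norm1 z.1 ^+ 2 + \sum_(h < H) \sum_(j < d) norm1 (col j (z.2 h)) ^+ 2.
Proof.
rewrite /normdH sqr_sqrtr // addr_ge0 ?sqr_ge0 // sumr_ge0 // => h _.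
by rewrite sumr_ge0 // => j _; rewrite sqr_ge0.
Qed.

Lemma RdH_sc (a b : R) x y (lam : R) : b <= 1 -> inX a b x -> inX a b y -> 0 < lam -> lam < 1 ->
  RdH (lam *: x + (1 - lam) *: y) <=
  lam * RdH x + (1 - lam) * RdH y - lam * (1 - lam) / 2 * normdH (x - y) ^+ 2.
Proof.
move=> b1 Xx Xy l0 l1.
have [ox1 ox2] := @inX_ok a b x b1 Xx; have [oy1 oy2] := @inX_ok a b y b1 Xy.
have Hp := @Ent_sc_col _ _ x.1 y.1 lam l0 l1 ox1 oy1.
have Hc h j := @Ent_sc_col _ _ _ _ lam l0 l1 (ox2 h j) (oy2 h j).
rewrite normdH_sqr fst_sub.
set c := lam * (1 - lam) / 2.
rewrite /RdH fst_comb.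
under eq_bigr do under eq_bigr do rewrite snd_comb col_comb.
have HS : \sum_(h < H) \sum_(j < d) c * norm1 (col j (x.2 h) - col j (y.2 h)) ^+ 2 <=
   \sum_(h < H) \sum_(j < d) Ent (lam *: col j (x.2 h) + (1 - lam) *: col j (y.2 h))
   - lam * \sum_(h < H) \sum_(j < d) Ent (col j (x.2 h))
   - (1 - lam) * \sum_(h < H) \sum_(j < d) Ent (col j (y.2 h)).
  rewrite !mulr_sumr -!sumrB; apply: ler_sum => h _.
  rewrite !mulr_sumr -!sumrB; apply: ler_sum => j _.
  exact: Hc.
have E : \sum_(h < H) \sum_(j < d) c * norm1 (col j (x.2 h) - col j (y.2 h)) ^+ 2 =
   c * \sum_(h < H) \sum_(j < d) norm1 (col j ((x - y).2 h)) ^+ 2.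
  rewrite mulr_sumr; apply: eq_bigr => h _; rewrite mulr_sumr; apply: eq_bigr => j _.
  by rewrite snd_sub col_sub.
rewrite E in HS.
rewrite -/c in Hp.
move: Hp HS.
set E0 := Ent (lam *: x.1 + (1 - lam) *: y.1).
set Ex := Ent x.1. set Ey := Ent y.1.
set N1 := norm1 (x.1 - y.1) ^+ 2.
set S0 := \sum_(h < H) \sum_(j < d) Ent (lam *: col j (x.2 h) + (1 - lam) *: col j (y.2 h)).
set Sx := \sum_(h < H) \sum_(j < d) Ent (col j (x.2 h)).
set Sy := \sum_(h < H) \sum_(j < d) Ent (col j (y.2 h)).
set NS := \sum_(h < H) \sum_(j < d) norm1 (col j ((x - y).2 h)) ^+ 2.
clearbody E0 Ex Ey N1 S0 Sx Sy NS c.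
move=> Hp HS.
rewrite -subr_ge0.
have -> : lam * (- Ex - Sx) + (1 - lam) * (- Ey - Sy) - c * (N1 + NS) - (- E0 - S0)
  = (E0 - lam * Ex - (1 - lam) * Ey - c * N1) + (S0 - lam * Sx - (1 - lam) * Sy - c * NS) by ring.
by apply: addr_ge0; rewrite subr_ge0.
Qed.

End S2.

Section S3.
Variable R : realType.
Variables (d H : nat).
Implicit Types x y z : mdpoint R d H.

Lemma RdH_le0 (a b : R) z : b <= 1 -> inX a b z -> RdH z <= 0.
Proof.
move=> b1 Xz; have [o1 o2] := @inX_ok _ _ _ a b z b1 Xz.
rewrite /RdH -opprD oppr_le0; apply: addr_ge0; first exact: Ent_ge0.
apply: sumr_ge0 => h _; apply: sumr_ge0 => j _; exact: Ent_ge0.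
Qed.

Lemma RdH_ge (a b : R) z : b <= 1 -> inX a b z ->
  - ((1 + H%:R * d%:R) * ln (d.+1)%:R) <= RdH z.
Proof.
move=> b1 Xz; have [o1 o2] := @inX_ok _ _ _ a b z b1 Xz.
rewrite /RdH -opprD lerN2 mulrDl mul1r; apply: lerD; first exact: (@Ent_le _ _ _ o1).
apply: le_trans (_ : \sum_(h < H) \sum_(j < d) ln (d.+1)%:R <= _).
  apply: ler_sum => h _; apply: ler_sum => j _; exact: (@Ent_le _ _ _ (o2 h j)).
have E : \sum_(h < H) \sum_(j < d) ln (d.+1)%:R = H%:R * d%:R * ln (d.+1)%:R :> R.
  rewrite sumr_const card_ord sumr_const card_ord -mulrnA -[LHS]mulr_natr natrM; ring.
rewrite E; exact: lexx.
Qed.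

Lemma normdH_ge0 z : 0 <= normdH z.
Proof. exact: sqrtr_ge0. Qed.

Lemma le_normdH_sq z (r : R) : 0 <= r -> r ^+ 2 <= normdH z ^+ 2 -> r <= normdH z.
Proof.
move=> r0 H2; rewrite -(ger0_norm r0) -sqrtr_sqr /normdH.
rewrite normdH_sqr in H2; exact: ler_wsqrtr.
Qed.

Lemma norm1_ge0 (v : 'cV[R]_d) : 0 <= norm1 v.
Proof. by apply: sumr_ge0 => i _; exact: normr_ge0. Qed.

Lemma fst_le_normdH z : norm1 z.1 <= normdH z.
Proof.
apply: le_normdH_sq; first exact: norm1_ge0.
rewrite normdH_sqr lerDl; apply: sumr_ge0 => h _; apply: sumr_ge0 => j _; exact: sqr_ge0.
Qed.

Lemma col_le_normdH z h0 j0 : norm1 (col j0 (z.2 h0)) <= normdH z.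
Proof.
apply: le_normdH_sq; first exact: norm1_ge0.
rewrite normdH_sqr.
apply: le_trans (_ : \sum_(h < H) \sum_(j < d) norm1 (col j (z.2 h)) ^+ 2 <= _); last first.
  rewrite lerDr; exact: sqr_ge0.
apply: le_trans (_ : \sum_(j < d) norm1 (col j (z.2 h0)) ^+ 2 <= _).
  by apply: (@elem_le_sum _ _ (fun j => norm1 (col j (z.2 h0)) ^+ 2)) => k; exact: sqr_ge0.
apply: (@elem_le_sum _ _ (fun h => \sum_(j < d) norm1 (col j (z.2 h)) ^+ 2)) => k.
by apply: sumr_ge0 => j _; exact: sqr_ge0.
Qed.

Lemma norm1_subC (u v : 'cV[R]_d) : norm1 (u - v) = norm1 (v - u).
Proof. by apply: eq_bigr => i _; rewrite !mxE distrC. Qed.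

Lemma normdH_subC x y : normdH (x - y) = normdH (y - x).
Proof.
rewrite /normdH !fst_sub norm1_subC; congr (Num.sqrt (_ + _)).
apply: eq_bigr => h _; apply: eq_bigr => j _.
by rewrite !snd_sub !col_sub norm1_subC.
Qed.

Lemma opnorm_le (M : 'M[R]_d) (N : R) : 0 <= N -> (forall j, norm1 (col j M) <= N) -> opnorm11 M <= N.
Proof.
move=> N0 HN; rewrite /opnorm11.
set S := (X in sup X).
have [[r Sr]|nS] := pselect (exists r, S r); last first.
  have -> : S = set0 by apply/seteqP; split => r // Sr; exfalso; apply: nS; exists r.
  by rewrite sup0.
apply: ge_sup; first by exists r.
move=> s [x [x1 ->]].
rewrite /norm1.
apply: le_trans (_ : \sum_i \sum_j `|M i j| * `|x j 0| <= _).
  apply: ler_sum => i _; rewrite mxE.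
  apply: le_trans (ler_norm_sum _ _ _) _.
  by apply: ler_sum => j _; rewrite normrM; exact: lexx.
rewrite exchange_big /=.
apply: le_trans (_ : \sum_j N * `|x j 0| <= _).
  apply: ler_sum => j _; rewrite -mulr_suml; apply: ler_wpM2r; first exact: normr_ge0.
  have := HN j; rewrite /norm1.
  by rewrite (eq_bigr (fun i => `|M i j|)) // => i _; rewrite mxE.
rewrite -mulr_sumr; move: x1; rewrite /norm1 => ->; rewrite mulr1; exact: lexx.
Qed.

Lemma opnorm_le_normdH z h : (0 < d)%N -> opnorm11 (z.2 h) <= normdH z.
Proof.
move=> _; apply: opnorm_le; first exact: normdH_ge0.
move=> j; exact: col_le_normdH.
Qed.
End S3.

Section S4.
Variable R : realType.
Variables (d H : nat).
Implicit Types x y z g : mdpoint R d H.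

Lemma dotpC x g : dotp x g = dotp g x.
Proof.
rewrite /dotp; congr (_ + _); first by apply: eq_bigr => i _; rewrite mulrC.
apply: eq_bigr => h _; apply: eq_bigr => i _; apply: eq_bigr => j _; exact: mulrC.
Qed.

Lemma dotpD x y g : dotp (x + y) g = dotp x g + dotp y g.
Proof.
rewrite /dotp.
have E1 : \sum_(i < d) (x + y).1 i 0 * g.1 i 0 = \sum_(i < d) x.1 i 0 * g.1 i 0 + \sum_(i < d) y.1 i 0 * g.1 i 0.
  by rewrite -big_split; apply: eq_bigr => i _; rewrite /= mxE mulrDl.
have E2 : \sum_(h < H) \sum_(i < d) \sum_(j < d) (x + y).2 h i j * g.2 h i j =
   \sum_(h < H) \sum_(i < d) \sum_(j < d) x.2 h i j * g.2 h i j +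
   \sum_(h < H) \sum_(i < d) \sum_(j < d) y.2 h i j * g.2 h i j.
  rewrite -big_split; apply: eq_bigr => h _.
  rewrite -big_split; apply: eq_bigr => i _.
  rewrite -big_split; apply: eq_bigr => j _.
  by rewrite /= ffunE mxE mulrDl.
rewrite E1 E2.
move: (\sum_(i < d) x.1 i 0 * g.1 i 0) (\sum_(i < d) y.1 i 0 * g.1 i 0) => A B.
move: (\sum_(h < H) _) (\sum_(h < H) _) => C D.
ring.
Qed.

Lemma dotpZ (lam : R) x g : dotp (lam *: x) g = lam * dotp x g.
Proof.
rewrite /dotp mulrDr mulr_sumr; congr (_ + _).
  by apply: eq_bigr => i _; rewrite /= mxE mulrA.
rewrite mulr_sumr; apply: eq_bigr => h _.
rewrite mulr_sumr; apply: eq_bigr => i _.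
rewrite mulr_sumr; apply: eq_bigr => j _.
by rewrite /= ffunE mxE mulrA.
Qed.

Lemma dotpN x g : dotp (- x) g = - dotp x g.
Proof. by rewrite -scaleN1r dotpZ mulN1r. Qed.

Lemma dotp_comb (lam mu : R) x y g : dotp (lam *: x + mu *: y) g = lam * dotp x g + mu * dotp y g.
Proof. by rewrite dotpD !dotpZ. Qed.

Lemma dotpB x y g : dotp (x - y) g = dotp x g - dotp y g.
Proof. by rewrite dotpD dotpN. Qed.

Lemma dotpBr g x y : dotp g (x - y) = dotp g x - dotp g y.
Proof. by rewrite dotpC dotpB !(dotpC g). Qed.
End S4.

Section S5.
Variable R : realType.
Variables (d H : nat).
Implicit Types x y w : mdpoint R d H.
Variables (a b eta L : R) (T : nat) (g z : nat -> mdpoint R d H).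
Hypothesis b1 : b <= 1.
Hypothesis eta0 : 0 < eta.
Hypothesis lmd : lazy_md a b eta T g z.

Definition F (t : nat) y := \sum_(1 <= s < t) dotp y (g s) + eta^-1 * RdH y.

Lemma F_comb t x y (lam : R) : inX a b x -> inX a b y -> 0 < lam -> lam < 1 ->
  F t (lam *: x + (1 - lam) *: y) <= lam * F t x + (1 - lam) * F t y
    - lam * (1 - lam) / (2 * eta) * normdH (x - y) ^+ 2.
Proof.
move=> Xx Xy l0 l1.
have HR := @RdH_sc _ _ _ a b x y lam b1 Xx Xy l0 l1.
have E : \sum_(1 <= s < t) dotp (lam *: x + (1 - lam) *: y) (g s) =
   lam * \sum_(1 <= s < t) dotp x (g s) + (1 - lam) * \sum_(1 <= s < t) dotp y (g s).
  rewrite !mulr_sumr -big_split; apply: eq_bigr => s _; exact: dotp_comb.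
rewrite /F E.
have ei : 0 < eta^-1 by rewrite invr_gt0.
have HR' := ler_wpM2l (ltW ei) HR.
move: HR'.
move: (RdH (lam *: x + (1 - lam) *: y)) (RdH x) (RdH y) (normdH (x - y)) => r0 rx ry n.
move: (\sum_(1 <= s < t) dotp x (g s)) (\sum_(1 <= s < t) dotp y (g s)) => sx sy.
move=> HR'.
rewrite -subr_ge0.
have -> : lam * (sx + eta^-1 * rx) + (1 - lam) * (sy + eta^-1 * ry) -
  lam * (1 - lam) / (2 * eta) * n ^+ 2 - (lam * sx + (1 - lam) * sy + eta^-1 * r0)
  = eta^-1 * (lam * rx + (1 - lam) * ry - lam * (1 - lam) / 2 * n ^+ 2) - eta^-1 * r0.
  by field; rewrite gt_eqF.
by rewrite subr_ge0.
Qed.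

Lemma lim_arg (G K : R) : 0 <= K -> (forall lam, 0 < lam -> lam < 1 -> (1 - lam) * K <= G) -> K <= G.
Proof.
move=> K0 HG.
have G0 : 0 <= G.
  apply: le_trans (HG (1/2) _ _); [apply: mulr_ge0 => //; lra| lra | lra].
rewrite leNgt; apply/negP => GK.
have Kp : 0 < K by exact: le_lt_trans GK.
have lam0 : 0 < (K - G) / (2 * K) by rewrite divr_gt0 // ?subr_gt0 // mulr_gt0.
have lam1 : (K - G) / (2 * K) < 1 by rewrite ltr_pdivrMr ?mulr_gt0 //; lra.
have := HG _ lam0 lam1.
have -> : (1 - (K - G) / (2 * K)) * K = (K + G) / 2 by field; rewrite gt_eqF.
lra.
Qed.

Lemma qgrowth t y : (1 <= t <= T)%N -> inX a b y ->
  F t (z t) + normdH (y - z t) ^+ 2 / (2 * eta) <= F t y.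
Proof.
move=> tT Xy.
have [Xz zmin] := lmd t tT.
have zmin' : forall w, inX a b w -> F t (z t) <= F t w by move=> w Xw; exact: zmin.
rewrite addrC -lerBrDr.
apply: lim_arg; first by rewrite divr_ge0 ?sqr_ge0 // mulr_ge0 // ltW.
move=> lam l0 l1.
have Xw : inX a b (lam *: y + (1 - lam) *: z t).
  by apply: inX_convex => //; rewrite ltW // ltW.
have H1 := zmin' _ Xw.
have H2 := @F_comb t y (z t) lam Xy Xz l0 l1.
move: H1 H2; move: (F t (z t)) (F t y) (F t (lam *: y + (1 - lam) *: z t)) (normdH (y - z t)) => fz fy fw n.
move=> H1 H2.
have H3 : lam * ((1 - lam) * (n ^+ 2 / (2 * eta))) <= lam * (fy - fz).
  have -> : lam * ((1 - lam) * (n ^+ 2 / (2 * eta))) = lam * (1 - lam) / (2 * eta) * n ^+ 2.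
    by field; rewrite gt_eqF.
  lra.
by rewrite ler_pM2l in H3.
Qed.
End S5.

Section S6.
Variable R : realType.
Variables (d H : nat).
Implicit Types x y w : mdpoint R d H.
Variables (a b eta L : R) (T : nat) (g z : nat -> mdpoint R d H).
Hypothesis b1 : b <= 1.
Hypothesis eta0 : 0 < eta.
Hypothesis L0 : 0 < L.
Hypothesis lmd : lazy_md a b eta T g z.
Hypothesis gdual : forall t, (1 <= t <= T)%N -> dual_bound L (g t).

Local Notation F := (@F R d H eta g).

Lemma F_succ t y : (1 <= t)%N -> F t.+1 y = F t y + dotp y (g t).
Proof. by move=> t1; rewrite /F big_nat_recr //=; ring. Qed.

Lemma key_step t y : (1 <= t <= T)%N -> inX a b y ->
  dotp (z t) (g t) + F t (z t) <= F t.+1 y + eta * L ^+ 2 / 2.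
Proof.
move=> tT Xy.
have Q := @qgrowth R d H a b eta T g z b1 eta0 lmd t y tT Xy.
have D := gdual t tT (z t - y).
rewrite dotpBr in D.
rewrite normdH_subC in D.
rewrite [dotp (z t) _]dotpC.
rewrite F_succ; last by case/andP: tT.
rewrite [dotp y _]dotpC.
move: Q D; move: (F t (z t)) (F t y) (dotp (g t) (z t)) (dotp (g t) y) (normdH (y - z t)) => fz fy gz gy n Q D.
have K : 0 <= (n - eta * L) ^+ 2 / (2 * eta) by rewrite divr_ge0 ?sqr_ge0 // mulr_ge0 // ltW.
have E : (n - eta * L) ^+ 2 / (2 * eta) = n ^+ 2 / (2 * eta) - L * n + eta * L ^+ 2 / 2.
  by field; rewrite gt_eqF.
rewrite E in K.
lra.
Qed.

Lemma telescope k : (1 <= k <= T)%N -> forall y, inX a b y ->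
  \sum_(1 <= t < k.+1) dotp (z t) (g t) + F 1 (z 1) <= F k.+1 y + k%:R * (eta * L ^+ 2 / 2).
Proof.
elim: k => [|k IH] // /andP[_ kT] y Xy.
rewrite big_nat_recr //=.
case: k IH kT => [|k] IH kT.
  rewrite big_geq // add0r mul1r.
  exact: key_step.
have kT' : (1 <= k.+1 <= T)%N by rewrite /= ltnW.
have [Xz _] := lmd k.+2 kT.
have I1 := IH kT' (z k.+2) Xz.
have I2 := @key_step k.+2 y kT Xy.
have -> : (k.+2)%:R = (k.+1)%:R + 1 :> R by rewrite natr1.
move: I1 I2; move: (\sum_(1 <= t < k.+2) dotp (z t) (g t)) (F 1 (z 1)) (F k.+2 (z k.+2)) (F k.+3 y)
  (dotp (z k.+2) (g k.+2)) => s0 f1 f2 f3 dz I1 I2.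
set c := eta * L ^+ 2 / 2 in I1 I2 *.
move: I1 I2; move: (k.+1%:R) c => kk cc I1 I2. lra.
Qed.

Lemma stab t : (1 <= t < T)%N -> normdH (z t - z t.+1) <= eta * L.
Proof.
move=> /andP[t1 tT].
have tT' : (1 <= t <= T)%N by rewrite t1 ltnW.
have tT'' : (1 <= t.+1 <= T)%N by rewrite tT.
have [Xz1 _] := lmd t tT'.
have [Xz2 _] := lmd t.+1 tT''.
have Q1 := @qgrowth R d H a b eta T g z b1 eta0 lmd t (z t.+1) tT' Xz2.
have Q2 := @qgrowth R d H a b eta T g z b1 eta0 lmd t.+1 (z t) tT'' Xz1.
rewrite !F_succ // in Q2.
have D := gdual t tT' (z t - z t.+1).
rewrite dotpBr in D.
rewrite normdH_subC in Q1.
rewrite [dotp (z t) _]dotpC [dotp (z t.+1) _]dotpC in Q2.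
have n0 := @normdH_ge0 R d H (z t - z t.+1).
move: Q1 Q2 D n0; move: (F t (z t)) (F t (z t.+1)) (dotp (g t) (z t)) (dotp (g t) (z t.+1)) (normdH (z t - z t.+1)) => f1 f2 d1 d2 n Q1 Q2 D n0.
have H1 : n ^+ 2 / eta <= L * n.
  have -> : n ^+ 2 / eta = n ^+ 2 / (2 * eta) + n ^+ 2 / (2 * eta) by field; rewrite gt_eqF.
  lra.
rewrite ler_pdivrMr // in H1.
have [->|nn0] := eqVneq n 0; first by rewrite mulr_ge0 // ltW.
have np : 0 < n by rewrite lt_neqAle eq_sym nn0.
rewrite -(ler_pM2r np); rewrite expr2 in H1.
by rewrite (le_trans H1) // mulrC mulrA; exact: lexx.
Qed.

Lemma regret_lin u : (1 <= T)%N -> inX a b u ->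
  \sum_(1 <= t < T.+1) (dotp (z t) (g t) - dotp u (g t)) <=
  eta^-1 * ((1 + H%:R * d%:R) * ln (d.+1)%:R) + T%:R * (eta * L ^+ 2 / 2).
Proof.
move=> T1 Xu.
have TT : (1 <= T <= T)%N by rewrite T1 leqnn.
have Tel := @telescope T TT u Xu.
have T1' : (1 <= 1 <= T)%N by rewrite leqnn T1.
have [Xz1 _] := lmd 1 T1'.
have R1 := @RdH_le0 R d H a b u b1 Xu.
have R2 := @RdH_ge R d H a b (z 1) b1 Xz1.
have F1 : F 1 (z 1) = eta^-1 * RdH (z 1) by rewrite /F big_geq // add0r.
rewrite F1 /F in Tel.
rewrite sumrB.
have ei : 0 <= eta^-1 by rewrite invr_ge0 ltW.
have R1' := ler_wpM2l ei R1.
have R2' := ler_wpM2l ei R2.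
rewrite mulr0 in R1'.
move: Tel R1' R2'.
move: (\sum_(1 <= t < T.+1) dotp (z t) (g t)) (\sum_(1 <= t < T.+1) dotp u (g t)) (eta^-1 * RdH u)
  (eta^-1 * RdH (z 1)) (T%:R * (eta * L ^+ 2 / 2)) ((1 + H%:R * d%:R) * ln (d.+1)%:R) => s1 s2 r1 r2 c K.
rewrite mulrN.
move: (eta^-1 * K) => eK.
move=> *; lra.
Qed.
End S6.


Lemma final_arith (R : realType) (K S tau L : R) : 0 < S -> 0 < tau -> 0 < L -> K <= 7 / 2 * S ^+ 2 ->
  (S / (L * tau))^-1 * K + tau ^+ 2 * (S / (L * tau) * L ^+ 2 / 2) <= L * (4 * S * tau).
Proof.
move=> S0 t0 L0 HK.
have HK' : K / S <= 7 / 2 * S.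
  by rewrite ler_pdivrMr // (le_trans HK) // expr2 mulrA; exact: lexx.
have Lt : 0 < L * tau by rewrite mulr_gt0.
have E : (S / (L * tau))^-1 * K + tau ^+ 2 * (S / (L * tau) * L ^+ 2 / 2) =
   (L * tau) * (K / S) + (L * tau) * S / 2.
  by field; rewrite !gt_eqF.
rewrite E.
have M := ler_wpM2l (ltW Lt) HK'.
have -> : L * (4 * S * tau) = (L * tau) * (7 / 2 * S) + (L * tau) * S / 2 by field.
by rewrite lerD2r.
Qed.

Lemma ln_bound (R : realType) (d H : nat) : (2 <= d)%N -> (1 <= H)%N ->
  (1 + H%:R * d%:R) * ln (d.+1)%:R <= 7 / 2 * (2 * d%:R * H%:R * ln d%:R) :> R.
Proof.
move=> d2 H1.
have dp : 0 < d%:R :> R by rewrite ltr0n; apply: leq_trans d2.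
have l0 : 0 < ln (d%:R : R) by apply: ln_gt0; rewrite ltr1n.
have L1 : ln (d.+1)%:R <= 2 * ln (d%:R : R).
  have -> : 2 * ln (d%:R : R) = ln (d%:R ^+ 2) by rewrite lnXn // mulr_natl.
  rewrite ler_ln ?posrE ?ltr0n ?exprn_gt0 //.
  rewrite -natrX ler_nat; rewrite expnS expn1.
  by apply: leq_trans (leq_mul d2 (leqnn d)); rewrite mul2n -addnn -addn1 leq_add2l; apply: leq_trans d2.
have L2 : 1 + H%:R * d%:R <= 2 * (H%:R * d%:R) :> R.
  have hd1 : 1 <= H%:R * d%:R :> R.
    by rewrite -natrM ler1n muln_gt0 H1 /= (leq_trans _ d2).
  move: hd1; move: (H%:R * d%:R) => x; lra.
have Hd0 : 0 <= H%:R * d%:R :> R by rewrite mulr_ge0.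
have M : (1 + H%:R * d%:R) * ln (d.+1)%:R <= (2 * (H%:R * d%:R)) * (2 * ln (d%:R : R)).
  apply: ler_pM; [by rewrite addr_ge0 | by apply: ln_ge0; rewrite ler1n | exact: L2 | exact: L1].
apply: le_trans M _.
have -> : 7 / 2 * (2 * d%:R * H%:R * ln (d%:R : R)) = 7 * ((H%:R * d%:R) * ln (d%:R : R)) :> R by field.
have -> : 2 * (H%:R * d%:R) * (2 * ln (d%:R : R)) = 4 * ((H%:R * d%:R) * ln (d%:R : R)) :> R by ring.
have P : 0 <= (H%:R * d%:R) * ln (d%:R : R) :> R by rewrite mulr_ge0 // ltW.
move: P; move: ((H%:R * d%:R) * ln (d%:R : R)) => x P; lra.
Qed.

Import Defs.
Theorem corollary1 (R : realType) (d H T : nat) (a b L : R)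
  (ell : nat -> mdpoint R d H -> R) (g z : nat -> mdpoint R d H) :
  (2 <= d)%N -> (1 <= H)%N -> (1 <= T)%N ->
  0 <= a -> a <= b -> b <= 1 -> 0 < L ->
  (forall t, (1 <= t <= T)%N -> convex_on a b (ell t)) ->
  (forall t, (1 <= t <= T)%N -> lipschitz_on a b L (ell t)) ->
  (forall t, (1 <= t <= T)%N -> subgrad_on a b (ell t) (z t) (g t) /\ dual_bound L (g t)) ->
  lazy_md a b (Num.sqrt (2 * d%:R * H%:R * ln d%:R) / (L * Num.sqrt T%:R)) T g z ->
  (forall u, inX a b u ->
     \sum_(1 <= t < T.+1) ell t (z t) - \sum_(1 <= t < T.+1) ell t u
     <= L * Num.sqrt (32 * d%:R * H%:R * ln d%:R * T%:R)) /\
  (forall t, (1 <= t < T)%N ->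
     norm1 ((z t).1 - (z t.+1).1)
       <= Num.sqrt (2 * d%:R * H%:R * ln d%:R) / Num.sqrt T%:R /\
     forall h : 'I_H,
       opnorm11 ((z t).2 h - (z t.+1).2 h)
         <= Num.sqrt (2 * d%:R * H%:R * ln d%:R) / Num.sqrt T%:R).
Proof.
move=> d2 H1 T1 a0 ab b1 L0 _ _ hsub lmd.
set S := Num.sqrt (2 * d%:R * H%:R * ln d%:R) in lmd *.
set tau := Num.sqrt T%:R in lmd *.
set eta := S / (L * tau) in lmd.
have dp : 0 < d%:R :> R by rewrite ltr0n; apply: leq_trans d2.
have l0 : 0 < ln (d%:R : R) by apply: ln_gt0; rewrite ltr1n.
have S0 : 0 < S.
  rewrite sqrtr_gt0 mulr_gt0 // mulr_gt0 // ?mulr_gt0 // ltr0n //; apply: leq_trans d2.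
have t0 : 0 < tau by rewrite sqrtr_gt0 ltr0n.
have eta0 : 0 < eta by rewrite divr_gt0 // mulr_gt0.
have gdual t : (1 <= t <= T)%N -> dual_bound L (g t) by move=> tT; case: (hsub t tT).
have etaL : eta * L = S / tau by rewrite /eta; field; rewrite !gt_eqF.
split.
  move=> u Xu.
  have J : \sum_(1 <= t < T.+1) ell t (z t) - \sum_(1 <= t < T.+1) ell t u <=
      \sum_(1 <= t < T.+1) (dotp (z t) (g t) - dotp u (g t)).
    rewrite -sumrB; apply: ler_sum_nat => t tT.
    have [sg _] := hsub t tT.
    have := sg u Xu.
    rewrite dotpBr [dotp (z t) _]dotpC [dotp u _]dotpC.
    move: (ell t (z t)) (ell t u) (dotp (g t) u) (dotp (g t) (z t)) => e1 e2 p1 p2; lra.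
  apply: le_trans J _.
  apply: le_trans (@regret_lin R d H a b eta L T g z b1 eta0 lmd gdual u T1 Xu) _.
  have E32 : Num.sqrt (32 * d%:R * H%:R * ln d%:R * T%:R) = 4 * S * tau :> R.
    rewrite -[RHS]ger0_norm; last by rewrite mulr_ge0 // ?mulr_ge0 // ltW.
    rewrite -sqrtr_sqr; congr Num.sqrt.
    rewrite !exprMn /S /tau !sqr_sqrtr ?ler0n //; first ring.
    by rewrite mulr_ge0 // ?mulr_ge0 // ?ler0n // ltW.
  rewrite E32.
  have Ttau : T%:R = tau ^+ 2 :> R by rewrite /tau sqr_sqrtr // ler0n.
  rewrite Ttau /eta.
  apply: final_arith => //.
  rewrite /S sqr_sqrtr; first exact: ln_bound.
  by rewrite mulr_ge0 // ?mulr_ge0 // ?ler0n // ltW.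
move=> t tT.
have St := @stab R d H a b eta L T g z b1 eta0 L0 lmd gdual t tT.
rewrite etaL in St.
split.
  apply: le_trans St; rewrite -fst_sub; exact: fst_le_normdH.
move=> h; apply: le_trans St.
rewrite -snd_sub; apply: opnorm_le_normdH; by apply: leq_trans d2.
Qed.
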